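(* Let $X,Y,Z,W$ be Banach spaces, $F:X\times Y\rightrightarrows Z$ a multifunction, $g:W\to Z$ a function, and $(\overline{x},\overline{y},\overline{z},\overline{w})\in X\times Y\times Z\times W$ with $\overline{z}:=-g(\overline{w})\in F(\overline{x},\overline{y})$. Define $\Gamma:Y\times W\rightrightarrows X$ by $\Gamma(y,w)=\{x\in X: 0\in F(x,y)+g(w)\}$. Suppose: (i) $F$ is Lipschitz-like with respect to $y$ uniformly in $x$ around $((\overline{x},\overline{y}),\overline{z})$ with constant $\eta\ge0$; (ii) $F$ is metrically regular with respect to $x$ uniformly in $y$ around $((\overline{x},\overline{y}),\overline{z})$ with constant $k>0$; (iii) $F(\cdot,y)$ is inner semicontinuous at $(\overline{x},\overline{z})$ for every $y$ in a neighborhood of $\overline{y}$; (iv) $g$ is locally Lipschitz around $\overline{w}$ with constant $\lambda$. Then there exists $\alpha>0$ such that for every $(y,w),(y',w')\in D(\overline{y},\alpha)\times D(\overline{w},\alpha)$ and every $\varepsilon>0$, \[ \Gamma(y',w')\cap D(\overline{x},\alpha)\subset\Gamma(y,w)+(k+\varepsilon)(\eta\|y-y'\|+\lambda\|w-w'\|)\mathbb{D}_X. \] In particular, $\Gamma$ is Lipschitz-like around $((\overline{y},\overline{w}),\overline{x})$ and \[ \operatorname{lip}\Gamma((\overline{y},\overline{w}),\overline{x})\le\widehat{\operatorname{reg}}_xF((\overline{x},\overline{y}),\overline{z})\cdot\max\{\widehat{\operatorname{lip}}_yF((\overline{x},\overline{y}),\overline{z}),\operatorname{lip}g(\overline{w})\}.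 \]
   Context: $B(x,r)$ and $D(x,r)$ are the open and closed balls, $\mathbb{D}_X$ the closed unit ball, $d(x,\emptyset)=\infty$; products carry the sum norm. For $F:X\times Y\rightrightarrows Z$ write $F_y=F(\cdot,y)$, $F_x=F(x,\cdot)$. $F$ is Lipschitz-like with respect to $y$ uniformly in $x$ around $((\overline{x},\overline{y}),\overline{z})$ with constant $L$ if there are neighborhoods $U$ of $\overline{x}$, $V$ of $\overline{y}$, $W_0$ of $\overline{z}$ with $F(x,y)\cap W_0\subset F(x,y')+L\|y-y'\|\mathbb{D}_Z$ for all $x\in U$, $y,y'\in V$; $\widehat{\operatorname{lip}}_yF((\overline{x},\overline{y}),\overline{z})$ is the infimum of such $L$. $F$ is metrically regular with respect to $x$ uniformly in $y$ around $((\overline{x},\overline{y}),\overline{z})$ with constant $L$ if there are such neighborhoods with $d(x,F_y^{-1}(z))\le L\,d(z,F_y(x))$ for all $(x,y,z)\in U\times V\times W_0$; $\widehat{\operatorname{reg}}_xF((\overline{x},\overline{y}),\overline{z})$ is the infimum of such $L$. A multifunction $T$ is inner semicontinuous at $(a,b)\in\operatorname{Gr}T$ if for every open $D\ni b$ there is a neighborhood $U$ of $a$ with $T(a')\cap D\ne\emptyset$ for all $a'\in U$. $T:A\rightrightarrows B$ is Lipschitz-like around $(\overline{a},\overline{b})$ with constant $L$ if there are neighborhoods $U$ of $\overline{a}$, $V$ of $\overline{b}$ with $T(a)\cap V\subset T(u)+L\|a-u\|\mathbb{D}_B$ for all $a,u\in U$; $\operatorname{lip}T(\overline{a},\overline{b})$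 is the infimum of such $L$; for a function $g$, $\operatorname{lip}g(\overline{w})$ is the infimum of Lipschitz constants of $g$ on neighborhoods of $\overline{w}$. *)

(* Defs.v *)
(* Banach spaces = completeNormedModType over R : realType. *)
From HB Require Import structures.
From mathcomp Require Import all_boot all_order all_algebra.
From mathcomp Require Import all_classical all_reals all_analysis.
Set Implicit Arguments. Unset Strict Implicit. Unset Printing Implicit Defensive.
Import Order.TTheory GRing.Theory Num.Theory.
Import numFieldNormedType.Exports.
Local Open Scope classical_set_scope.
Local Open Scope ring_scope.

Section Defs.
Context {R : realType}.

Definition cball {V : normedModType R} (x : V) (r : R) : set V :=
  [set u | `|u - x| <= r].

(* distance to a set, in extended reals; d(x, emptyset) = +oo *)
Definition edist {V : normedModType R} (x : V) (A : set V) : \bar R :=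
  ereal_inf [set (`|x - a|)%:E | a in A].

Definition lip_like_y_unif {X Y Z : normedModType R} (F : X -> Y -> set Z)
    (xb : X) (yb : Y) (zb : Z) (L : R) : Prop :=
  exists U V W0, [/\ nbhs xb U, nbhs yb V, nbhs zb W0 &
    forall x y y', U x -> V y -> V y' ->
      forall z, F x y z -> W0 z ->
        exists2 z', F x y' z' & `|z - z'| <= L * `|y - y'|].

Definition lip_y_hat {X Y Z : normedModType R} (F : X -> Y -> set Z)
    (xb : X) (yb : Y) (zb : Z) : \bar R :=
  ereal_inf [set L%:E | L in [set L : R | 0 <= L /\ lip_like_y_unif F xb yb zb L]].

Definition metreg_x_unif {X Y Z : normedModType R} (F : X -> Y -> set Z)
    (xb : X) (yb : Y) (zb : Z) (L : R) : Prop :=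
  exists U V W0, [/\ nbhs xb U, nbhs yb V, nbhs zb W0 &
    forall x y z, U x -> V y -> W0 z ->
      (edist x [set x' | F x' y z] <= L%:E * edist z (F x y))%E].

Definition reg_x_hat {X Y Z : normedModType R} (F : X -> Y -> set Z)
    (xb : X) (yb : Y) (zb : Z) : \bar R :=
  ereal_inf [set L%:E | L in [set L : R | 0 <= L /\ metreg_x_unif F xb yb zb L]].

Definition inner_semicont {A B : normedModType R} (T : A -> set B) (a : A) (b : B) : Prop :=
  forall D : set B, open D -> D b ->
    exists2 U, nbhs a U & forall a', U a' -> T a' `&` D !=set0.

Definition loc_lipschitz {W Z : normedModType R} (g : W -> Z) (wb : W) (L : R) : Prop :=
  exists2 N, nbhs wb N & forall w w', N w -> N w' -> `|g w - g w'| <= L * `|w - w'|.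

Definition lip_fun {W Z : normedModType R} (g : W -> Z) (wb : W) : \bar R :=
  ereal_inf [set L%:E | L in [set L : R | 0 <= L /\ loc_lipschitz g wb L]].

(* T : Y x W =>> X Lipschitz-like around ((yb,wb),xb) with constant L,
   the product Y x W carrying the sum norm ||y|| + ||w||. *)
Definition lip_like2 {Y W X : normedModType R} (T : Y -> W -> set X)
    (yb : Y) (wb : W) (xb : X) (L : R) : Prop :=
  exists U V, [/\ nbhs (yb, wb) U, nbhs xb V &
    forall p q : Y * W, U p -> U q ->
      forall x, T p.1 p.2 x -> V x ->
        exists2 x', T q.1 q.2 x' &
          `|x - x'| <= L * (`|p.1 - q.1| + `|p.2 - q.2|)].

Definition lip_mult2 {Y W X : normedModType R} (T : Y -> W -> set X)
    (yb : Y) (wb : W) (xb : X) : \bar R :=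
  ereal_inf [set L%:E | L in [set L : R | 0 <= L /\ lip_like2 T yb wb xb L]].

Definition Gamma {X Y Z W : normedModType R} (F : X -> Y -> set Z) (g : W -> Z)
    (y : Y) (w : W) : set X :=
  [set x | exists2 z, F x y z & z + g w = 0].

End Defs.

(* Main.v *)
Require Import Defs.
From HB Require Import structures.
From mathcomp Require Import all_boot all_order all_algebra.
From mathcomp Require Import all_classical all_reals all_analysis.
From mathcomp Require Import lra.
Import Order.TTheory GRing.Theory Num.Theory.
Import numFieldNormedType.Exports.
Local Open Scope classical_set_scope.
Local Open Scope ring_scope.

Lemma nbhs_rad (R : realType) (V : normedModType R) (x : V) (A : set V) :
  nbhs x A -> exists2 r : R, 0 < r & forall y, `|y - x| < r -> A y.
Proof.
move=> /nbhs_ballP [e e0 H]; exists e => // y hy; apply: H.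
by rewrite -ball_normE /ball_ /= distrC.
Qed.
Arguments nbhs_rad {R V x A}.

Lemma nbhs_cball (R : realType) (V : normedModType R) (x : V) (r : R) :
  0 < r -> nbhs x (cball x r).
Proof.
move=> r0; apply/nbhs_ballP; exists r => // y.
rewrite -ball_normE /ball_ /cball /= distrC => /ltW. done.
Qed.

Lemma nbhs_prod2 (R : realType) (Y W : normedModType R) (y : Y) (w : W) A B :
  nbhs y A -> nbhs w B -> nbhs (y, w) [set p | A p.1 /\ B p.2].
Proof.
move=> hA hB; exists (A, B) => //= -[a b] [] /=; by [].
Qed.

Lemma edist_ge0 (R : realType) (V : normedModType R) (x : V) A :
  (0 <= Defs.edist x A)%E.
Proof. by apply: le_ereal_inf_tmp => _ [a _ <-]; rewrite lee_fin. Qed.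

Lemma core (R : realType) (X Y Z W : normedModType R)
  (F : X -> Y -> set Z) (g : W -> Z) (xb : X) (yb : Y) (wb : W) (eta k lambda : R) :
  0 < k -> lip_like_y_unif F xb yb (- g wb) eta ->
  metreg_x_unif F xb yb (- g wb) k -> loc_lipschitz g wb lambda ->
  exists2 alpha : R, 0 < alpha &
     forall (y y' : Y) (w w' : W),
       cball yb alpha y -> cball yb alpha y' ->
       cball wb alpha w -> cball wb alpha w' ->
       forall eps : R, 0 < eps ->
       forall x, Gamma F g y' w' x -> cball xb alpha x ->
         exists2 x0, Gamma F g y w x0 &
           `|x - x0| <= (k + eps) * (eta * `|y - y'| + lambda * `|w - w'|).
Proof.
move=> k0 [U1 [V1 [W1 [hU1 hV1 hW1 HL]]]] [U2 [V2 [W2 [hU2 hV2 hW2 HM]]]] [N hN HN].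
have [rX rX0 HX] := nbhs_rad (filterI hU1 hU2).
have [rY rY0 HY] := nbhs_rad (filterI hV1 hV2).
have [rW rW0 HW] := nbhs_rad (filterI hW1 hW2).
have [rN rN0 HNr] := nbhs_rad hN.
have l1 : 0 < `|lambda| + 1 by rewrite ltr_wpDl.
set m := Num.min (Num.min rX rY) (Num.min rN (rW / (`|lambda| + 1))).
have m0 : 0 < m by rewrite !lt_min rX0 rY0 rN0 divr_gt0.
have mX : m <= rX by rewrite !ge_min lexx.
have mY : m <= rY by rewrite !ge_min lexx !orbT.
have mN : m <= rN by rewrite !ge_min lexx !orbT.
have mW : m * (`|lambda| + 1) <= rW.
  by rewrite -ler_pdivlMr // !ge_min lexx !orbT.
exists (m / 2); first by rewrite divr_gt0.
have m2 : m / 2 < m by rewrite ltr_pdivrMr // ltr_pMr // ltr1n.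
move=> y y' w w' hy hy' hw hw' eps eps0 x [z Fz zg] hx.
have ez : z = - g w' by apply/eqP; rewrite -addr_eq0 zg.
subst z.
have [xU1 xU2] : U1 x /\ U2 x by apply: HX; exact: le_lt_trans hx (lt_le_trans m2 mX).
have [yV1 yV2] : V1 y /\ V2 y by apply: HY; exact: le_lt_trans hy (lt_le_trans m2 mY).
have [y'V1 y'V2] : V1 y' /\ V2 y' by apply: HY; exact: le_lt_trans hy' (lt_le_trans m2 mY).
have wN : N w by apply: HNr; exact: le_lt_trans hw (lt_le_trans m2 mN).
have w'N : N w' by apply: HNr; exact: le_lt_trans hw' (lt_le_trans m2 mN).
have bN : N wb by apply: HNr; rewrite subrr normr0.
have gW : forall u, cball wb (m / 2) u -> W1 (- g u) /\ W2 (- g u).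
  move=> u hu; apply: HW; rewrite opprK addrC.
  have uN : N u by apply: HNr; exact: le_lt_trans hu (lt_le_trans m2 mN).
  apply: (le_lt_trans (HN _ _ bN uN)); rewrite distrC.
  rewrite /cball in hu.
  have h1 : lambda * `|u - wb| <= `|lambda| * `|u - wb| by rewrite ler_wpM2r // ler_norm.
  have h2 : `|lambda| * `|u - wb| <= `|lambda| * (m / 2) by rewrite ler_wpM2l.
  have := normr_ge0 lambda; nra.
have [gw1 gw2] := gW _ hw.
have [gw'1 gw'2] := gW _ hw'.
have [z'' Fz'' hz''] := HL x y' y xU1 y'V1 yV1 _ Fz gw'1.
have hM := HM x y (- g w) xU2 yV2 gw2.
set r := eta * `|y - y'| + lambda * `|w - w'|.
have hr : `|- g w - z''| <= r.
  have -> : - g w - z'' = (g w' - g w) + (- g w' - z'') by rewrite addrCA addrA addKr.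
  apply: (le_trans (ler_normD _ _)).
  have := HN _ _ w'N wN; rewrite /r (distrC y) (distrC w); lra.
have r0 : 0 <= r by exact: le_trans (normr_ge0 _) hr.
case: (eqVneq r 0) => [r_eq0|rn0].
  exists x; last by rewrite subrr normr0 r_eq0 mulr0.
  exists z''; first by [].
  move: hr; rewrite r_eq0 normr_le0 subr_eq0 => /eqP <-; exact: addNr.
have rp : 0 < r by rewrite lt_neqAle eq_sym rn0 r0.
have hd : (Defs.edist (- g w)%R (F x y) <= r%:E)%E.
  by apply: ge_ereal_inf; exists (`|(- g w - z'')%R|)%:E; [exists z'' | rewrite lee_fin].
have : (Defs.edist x [set x' | F x' y (- g w)%R] < ((k + eps) * r)%:E)%E.
  apply: (le_lt_trans hM); apply: (le_lt_trans (lee_wpmul2l _ hd)); first by rewrite lee_fin ltW.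
  by rewrite -EFinM lte_fin ltr_pM2r // ltrDl.
move=> /ereal_inf_lt [_ [a Fa <-]]; rewrite lte_fin => ha.
exists a; last exact: ltW.
by exists (- g w) => //; rewrite addNr.
Qed.

Lemma metreg_mono (R : realType) (X Y Z : normedModType R) (F : X -> Y -> set Z)
  xb yb zb (k1 k2 : R) : k1 <= k2 -> metreg_x_unif F xb yb zb k1 -> metreg_x_unif F xb yb zb k2.
Proof.
move=> hk [U [V [W0 [hU hV hW H]]]]; exists U, V, W0; split => // x y z ux vy wz.
apply: (le_trans (H _ _ _ ux vy wz)); apply: lee_wpmul2r; first exact: edist_ge0.
by rewrite lee_fin.
Qed.

Arguments metreg_mono {R X Y Z F xb yb zb k1 k2}.

Lemma liplike_mono (R : realType) (X Y Z : normedModType R) (F : X -> Y -> set Z)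
  xb yb zb (k1 k2 : R) : k1 <= k2 -> lip_like_y_unif F xb yb zb k1 -> lip_like_y_unif F xb yb zb k2.
Proof.
move=> hk [U [V [W0 [hU hV hW H]]]]; exists U, V, W0; split => // x y y' ux vy vy' z Fz Wz.
have [z' Fz' hz'] := H x y y' ux vy vy' z Fz Wz; exists z' => //.
by apply: (le_trans hz'); rewrite ler_wpM2r.
Qed.

Arguments liplike_mono {R X Y Z F xb yb zb k1 k2}.

Lemma loclip_mono (R : realType) (W Z : normedModType R) (g : W -> Z) wb (k1 k2 : R) :
  k1 <= k2 -> loc_lipschitz g wb k1 -> loc_lipschitz g wb k2.
Proof.
move=> hk [N hN H]; exists N => // w w' nw nw'.
by apply: (le_trans (H _ _ nw nw')); rewrite ler_wpM2r.
Qed.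

Arguments loclip_mono {R W Z g wb k1 k2}.

Lemma inf_prop (R : realType) (P : R -> Prop) (L0 : R) :
  (forall u v, 0 <= u -> u <= v -> P u -> P v) -> 0 <= L0 -> P L0 ->
  exists s : R, [/\ ereal_inf [set L%:E | L in [set L : R | 0 <= L /\ P L]] = s%:E,
     0 <= s & forall d, 0 < d -> P (s + d)].
Proof.
move=> mono L00 PL0.
set S := [set L%:E | L in [set L : R | 0 <= L /\ P L]].
have hup : (ereal_inf S <= L0%:E)%E by apply: ereal_inf_lbound; exists L0.
have hlo : (0%:E <= ereal_inf S)%E by apply: le_ereal_inf_tmp => _ [L [L0' _] <-]; rewrite lee_fin.
move: hup hlo; case E : (ereal_inf S) => [s| |] //= _; rewrite lee_fin => s0.
exists s; split => // d d0.
have : (ereal_inf S < (s + d)%:E)%E by rewrite E lte_fin ltrDl.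
move=> /ereal_inf_lt [_ [L [L0' PL] <-]]; rewrite lte_fin => hL.
exact: (mono L) (ltW hL) PL.
Qed.

Lemma lipGamma (R : realType) (X Y Z W : normedModType R)
  (F : X -> Y -> set Z) (g : W -> Z) (xb : X) (yb : Y) (wb : W) (eta k lambda eps : R) :
  0 < k -> 0 <= eta -> 0 <= lambda -> 0 < eps -> lip_like_y_unif F xb yb (- g wb) eta ->
  metreg_x_unif F xb yb (- g wb) k -> loc_lipschitz g wb lambda ->
  lip_like2 (Gamma F g) yb wb xb ((k + eps) * Num.max eta lambda).
Proof.
move=> k0 e0 l0 eps0 hL hM hg.
have [a a0 H] := @core _ _ _ _ _ F g xb yb wb eta k lambda k0 hL hM hg.
exists [set p | cball yb a p.1 /\ cball wb a p.2], (cball xb a); split.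
- by apply: nbhs_prod2; apply: nbhs_cball.
- exact: nbhs_cball.
move=> p q [p1 p2] [q1 q2] x Tx Vx.
have [x0 G0 h0] := H q.1 p.1 q.2 p.2 q1 p1 q2 p2 eps eps0 x Tx Vx.
exists x0 => //; apply: (le_trans h0).
rewrite -mulrA; apply: ler_wpM2l; first by rewrite addr_ge0 // ?ltW.
rewrite (distrC q.1) (distrC q.2).
have hm1 : eta <= Num.max eta lambda by rewrite le_max lexx.
have hm2 : lambda <= Num.max eta lambda by rewrite le_max lexx orbT.
have := normr_ge0 (p.1 - q.1); have := normr_ge0 (p.2 - q.2); nra.
Qed.

Theorem proposition4p1 (R : realType)
  (X Y Z W : completeNormedModType R)
  (F : X -> Y -> set Z) (g : W -> Z)
  (xb : X) (yb : Y) (wb : W) (eta k lambda : R) :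
  F xb yb (- g wb) ->
  0 <= eta -> lip_like_y_unif F xb yb (- g wb) eta ->
  0 < k -> metreg_x_unif F xb yb (- g wb) k ->
  (exists2 V, nbhs yb V & forall y, V y -> inner_semicont (F^~ y) xb (- g wb)) ->
  loc_lipschitz g wb lambda ->
  (exists2 alpha : R, 0 < alpha &
     forall (y y' : Y) (w w' : W),
       cball yb alpha y -> cball yb alpha y' ->
       cball wb alpha w -> cball wb alpha w' ->
       forall eps : R, 0 < eps ->
       forall x, Gamma F g y' w' x -> cball xb alpha x ->
         exists2 x0, Gamma F g y w x0 &
           `|x - x0| <= (k + eps) * (eta * `|y - y'| + lambda * `|w - w'|))
  /\ (exists L : R, lip_like2 (Gamma F g) yb wb xb L)
  /\ (lip_mult2 (Gamma F g) yb wb xb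
        <= reg_x_hat F xb yb (- g wb)%R *
           maxe (lip_y_hat F xb yb (- g wb)%R) (lip_fun g wb))%E.
Proof.
move=> _ e0 hL k0 hM _ hg.
have hg' : loc_lipschitz g wb (Num.max lambda 0).
  by apply: loclip_mono hg; rewrite le_max lexx.
have l0 : 0 <= Num.max lambda 0 by rewrite le_max lexx orbT.
split; first exact: (@core _ _ _ _ _ F g xb yb wb eta k lambda k0 hL hM hg).
split; first by exists ((k + 1) * Num.max eta (Num.max lambda 0)); apply: lipGamma.
have [r [Er r0 Pr]] := @inf_prop R (metreg_x_unif F xb yb (- g wb)) k
  (fun u v _ huv Pu => metreg_mono huv Pu) (ltW k0) hM.
have [a [Ea a0 Pa]] := @inf_prop R (lip_like_y_unif F xb yb (- g wb)) eta
  (fun u v _ huv Pu => liplike_mono huv Pu) e0 hL.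
have [b [Eb b0 Pb]] := @inf_prop R (loc_lipschitz g wb) (Num.max lambda 0)
  (fun u v _ huv Pu => loclip_mono huv Pu) l0 hg'.
rewrite /reg_x_hat /lip_y_hat /lip_fun Er Ea Eb -EFin_max -EFinM.
apply/lee_addgt0Pr => e e0'.
set m := Num.max a b.
have m0 : 0 <= m by rewrite le_max a0.
set D := r + 2 * m + 2 + e.
have D0 : 0 < D by rewrite /D; lra.
set d := e / D.
have d0 : 0 < d by rewrite divr_gt0.
have dD : d * D = e by rewrite /d divfK // gt_eqF.
have hG := @lipGamma _ _ _ _ _ F g xb yb wb (a + d) (r + d) (b + d) d
  (ltr_wpDl r0 d0) (addr_ge0 a0 (ltW d0)) (addr_ge0 b0 (ltW d0)) d0
  (Pa d d0) (Pr d d0) (Pb d d0).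
have hmx : Num.max (a + d) (b + d) <= m + d.
  by rewrite ge_max !lerD2r /m !le_max !lexx ?orbT.
have hmx0 : 0 <= Num.max (a + d) (b + d) by rewrite le_max addr_ge0 // ltW.
apply: (@le_trans _ _ ((r + d + d) * Num.max (a + d) (b + d))%:E).
  apply: ereal_inf_lbound.
  exists ((r + d + d) * Num.max (a + d) (b + d)) => //; split => //.
  by rewrite mulr_ge0 // ?addr_ge0 // ltW.
rewrite -EFinD lee_fin.
apply: le_trans (_ : (r + d + d) * (m + d) <= _).
  by apply: ler_wpM2l => //; rewrite !addr_ge0 // ltW.
rewrite /D in dD; nra.
Qed.
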